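(* Let $N\ge2$, $r\ge1$ and $c>0$. The set ${}^c\mathcal L^{N,r}_{\mathbf m,\mathbf p}$ of all matrices $\mathbf D\in\mathbb R^{m\times p}$ that can be written as $\mathbf D=\sum_{k=1}^r\mathbf D^k_1\otimes\cdots\otimes\mathbf D^k_N$ with $\mathbf D^k_n\in\mathbb R^{m_n\times p_n}$ and $\|\mathbf D^k_1\otimes\cdots\otimes\mathbf D^k_N\|_F\le c$ for every $k\in[r]$ is closed in $\mathbb R^{m\times p}$.
   Context: $m=\prod_{n=1}^N m_n$, $p=\prod_{n=1}^N p_n$; $\otimes$ denotes the Kronecker product and $\|\cdot\|_F$ the Frobenius norm. *)

(* Defs.v *)
From HB Require Import structures.
From mathcomp Require Import all_boot all_order all_algebra.
From mathcomp Require Import all_classical all_reals all_analysis.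
From mathcomp Require Import mxtens.
Set Implicit Arguments. Unset Strict Implicit. Unset Printing Implicit Defensive.
Import Order.TTheory GRing.Theory Num.Theory.
Import numFieldNormedType.Exports.
Local Open Scope ring_scope.

Fixpoint prodd (N : nat) (m : nat -> nat) : nat :=
  match N with
  | 0 => 1%N
  | N'.+1 => (prodd N' m * m N')%N
  end.

(* Iterated Kronecker product D 0 ⊗ D 1 ⊗ ... ⊗ D (N-1)
   (the factors D n for n >= N are ignored). *)
Fixpoint kronN (R : pzRingType) (m p : nat -> nat) (N : nat)
  (D : forall n : nat, 'M[R]_(m n, p n)) : 'M[R]_(prodd N m, prodd N p) :=
  match N return 'M[R]_(prodd N m, prodd N p) with
  | 0 => (1%:M : 'M[R]_1)
  | N'.+1 => @kronN R m p N' D *t D N'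
  end.

Definition frob (R : rcfType) (a b : nat) (A : 'M[R]_(a, b)) : R :=
  Num.sqrt (\sum_(i < a) \sum_(j < b) A i j ^+ 2).

Definition bounded_low_rank_set (R : realType) (N r : nat) (m p : nat -> nat)
  (c : R) : set 'M[R]_(prodd N m, prodd N p) :=
  [set D | exists Ds : 'I_r -> forall n : nat, 'M[R]_(m n, p n),
     D = \sum_(k < r) @kronN R m p N (Ds k) /\
     forall k : 'I_r, frob (@kronN R m p N (Ds k)) <= c].

(* Main.v *)
Require Import Defs.
From HB Require Import structures.
From mathcomp Require Import all_boot all_order all_algebra.
From mathcomp Require Import all_classical all_reals all_analysis.
From mathcomp Require Import mxtens.
Import Order.TTheory GRing.Theory Num.Theory.
Import numFieldNormedType.Exports.
Set Implicit Arguments. Unset Strict Implicit. Unset Printing Implicit Defensive.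
Local Open Scope classical_set_scope.
Local Open Scope ring_scope.

Section Alg.
Variable R : realType.

Definition sq (a b : nat) (A : 'M[R]_(a,b)) : R := \sum_(i < a) \sum_(j < b) A i j ^+ 2.

Lemma sq_ge0 a b (A : 'M[R]_(a,b)) : 0 <= sq A.
Proof. by apply: sumr_ge0 => i _; apply: sumr_ge0 => j _; exact: sqr_ge0. Qed.

Lemma sq_tens a b a' b' (A : 'M[R]_(a,b)) (B : 'M[R]_(a',b')) :
  sq (A *t B) = sq A * sq B.
Proof.
rewrite /sq mulr_sum; apply: eq_bigr => i _.
rewrite mulr_sum; apply: eq_bigr => j _.
by rewrite !mxE exprMn.
Qed.

Lemma frob_tens a b a' b' (A : 'M[R]_(a,b)) (B : 'M[R]_(a',b')) :
  frob (A *t B) = frob A * frob B.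
Proof. rewrite /frob -sqrtrM; [congr Num.sqrt; exact: sq_tens | exact: sq_ge0]. Qed.

Lemma frob_ge0 a b (A : 'M[R]_(a,b)) : 0 <= frob A.
Proof. exact: sqrtr_ge0. Qed.

Lemma frob_kronN (m p : nat -> nat) N (D : forall n, 'M[R]_(m n, p n)) :
  frob (@kronN R m p N D) = \prod_(n < N) frob (D n).
Proof.
elim: N => [|N IH] /=.
  rewrite big_ord0 /frob /sq !big_ord1 mxE /= expr1n; exact: sqrtr1.
by rewrite frob_tens IH big_ord_recr.
Qed.

Lemma entry_le_frob a b (A : 'M[R]_(a,b)) i j : `|A i j| <= frob A.
Proof.
rewrite /frob -sqrtr_sqr ler_sqrt ?sq_ge0 //.
apply: le_trans (_ : \sum_(j' < b) A i j' ^+ 2 <= _).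
  rewrite (bigD1 j) //= lerDl; apply: sumr_ge0 => *; exact: sqr_ge0.
rewrite /sq (bigD1 i) //= lerDl; apply: sumr_ge0 => *.
apply: sumr_ge0 => *; exact: sqr_ge0.
Qed.

Lemma tensZl a b a' b' (s : R) (A : 'M[R]_(a,b)) (B : 'M[R]_(a',b')) :
  (s *: A) *t B = s *: (A *t B).
Proof. by apply/matrixP => i j; rewrite !mxE mulrA. Qed.

Lemma tensZr a b a' b' (s : R) (A : 'M[R]_(a,b)) (B : 'M[R]_(a',b')) :
  A *t (s *: B) = s *: (A *t B).
Proof. by apply/matrixP => i j; rewrite !mxE mulrCA. Qed.

Lemma kronN_scale (m p : nat -> nat) N (s : nat -> R) (D : forall n, 'M[R]_(m n, p n)) :
  @kronN R m p N (fun n => s n *: D n) = (\prod_(n < N) s n) *: @kronN R m p N D.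
Proof.
elim: N => [|N IH] /=.
  by rewrite big_ord0 scale1r; reflexivity.
by rewrite IH tensZl tensZr big_ord_recr scalerA.
Qed.

Lemma frobZ a b (s : R) (A : 'M[R]_(a,b)) : frob (s *: A) = `|s| * frob A.
Proof.
rewrite /frob -sqrtr_sqr -sqrtrM ?sqr_ge0 //; congr Num.sqrt.
rewrite /sq mulr_sumr; apply: eq_bigr => i _; rewrite mulr_sumr.
by apply: eq_bigr => j _; rewrite mxE exprMn.
Qed.

Lemma frob_eq0 a b (A : 'M[R]_(a,b)) : frob A = 0 -> A = 0.
Proof.
move=> /eqP; rewrite sqrtr_eq0 => h.
have h0 : sq A = 0 by apply/eqP; rewrite eq_le h sq_ge0.
apply/matrixP => i j; rewrite mxE.
have h1 := psumr_eq0P (fun i _ => sumr_ge0 _ (fun j _ => sqr_ge0 (A i j))) h0.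
have h2 := psumr_eq0P (fun j _ => sqr_ge0 (A i j)) (h1 i isT).
by apply/eqP; rewrite -sqrf_eq0 (h2 j isT).
Qed.


Lemma rescale (m p : nat -> nat) N (c : R) (D : forall n, 'M[R]_(m n, p n)) :
  (0 < N)%N -> 0 <= c -> frob (kronN N D) <= c ->
  exists D' : forall n, 'M[R]_(m n, p n),
    kronN N D' = kronN N D /\ forall n i j, `|D' n i j| <= 1 + c.
Proof.
move=> N0 c0 hc.
have c1 : 0 <= 1 + c by rewrite addr_ge0.
set t := fun n => frob (D n).
have hT : frob (kronN N D) = \prod_(n < N) t n by rewrite frob_kronN.
case: (eqVneq (\prod_(n < N) t n) 0) => [T0|T0].
  exists (fun n => 0 *: D n); split.
    rewrite kronN_scale.
    have -> : \prod_(n < N) (0 : R) = 0.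
      by case: (N) N0 => // N1 _; rewrite big_ord_recr /= mulr0.
    by rewrite scale0r; apply/esym/frob_eq0; rewrite hT.
  by move=> n i j; rewrite scale0r mxE normr0.
case: N N0 hT T0 hc => // N _ hT T0 hc.
have T0' : \prod_(n < N) t n != 0.
  by move: T0; rewrite big_ord_recr /=; apply: contraNneq => ->; rewrite mul0r.
have tn0 : forall n : 'I_N, t n != 0.
  move=> n; move: T0'; apply: contraNneq => tn.
  by rewrite (bigD1 n) //= tn mul0r.
pose s n := if (n < N)%N then (t n)^-1 else if n == N then \prod_(l < N) t l else 0.
exists (fun n => s n *: D n); split.
  rewrite kronN_scale.
  suff -> : \prod_(n < N.+1) s n = 1 by rewrite scale1r.
  rewrite big_ord_recr /= /s ltnn eqxx.
  rewrite (eq_bigr (fun n : 'I_N => (t n)^-1)); last by move=> n _; rewrite /= ltn_ord.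
  by rewrite prodfV mulVf.
move=> n i j; apply: le_trans (entry_le_frob _ i j) _.
rewrite frobZ /s -/(t n).
case: ltnP => hn.
  have := tn0 (Ordinal hn); rewrite /= => tn.
  rewrite normfV ger0_norm ?frob_ge0 // mulVf // lerDl //.
case: eqP => [en|_]; last by rewrite normr0 mul0r.
rewrite ger0_norm; last by apply: prodr_ge0 => l _; exact: frob_ge0.
rewrite en -(big_ord_recr N t) -hT; apply: le_trans hc _; rewrite lerDr //.
Qed.

End Alg.

Section Top.
Variables (R : realType) (r : nat) (m p : nat -> nat).

Definition Idx := ('I_r * nat * nat * nat)%type.
Definition X := prod_topology (fun _ : Idx => (R : topologicalType)).

Definition Mat (f : X) (k : 'I_r) (n : nat) : 'M[R]_(m n, p n) :=
  \matrix_(i, j) f (k, n, nat_of_ord i, nat_of_ord j).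

Lemma cont_entry k n i j : continuous (fun f : X => Mat f k n i j).
Proof.
have -> : (fun f : X => Mat f k n i j) = proj (k, n, nat_of_ord i, nat_of_ord j).
  by apply: funext => f; rewrite mxE.
exact: proj_continuous.
Qed.

Lemma cont_kron k N a b : continuous (fun f : X => kronN N (Mat f k) a b).
Proof.
elim: N a b => [|N IH] a b /=.
  apply: cst_continuous.
have E : (fun f : X => (kronN N (Mat f k) *t Mat f k N) a b) =
   (fun f : X => kronN N (Mat f k) (mxtens_unindex a).1 (mxtens_unindex b).1 *
    Mat f k N (mxtens_unindex a).2 (mxtens_unindex b).2).
  by apply: funext => f; rewrite [LHS]mxE.
rewrite E.
move=> f.
have h := cvgM (IH (mxtens_unindex a).1 (mxtens_unindex b).1 f) (@cont_entry k N (mxtens_unindex a).2 (mxtens_unindex b).2 f).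
exact: h.
Qed.


Lemma cont_sum (T : topologicalType) n (F : 'I_n -> T -> R) :
  (forall i, continuous (F i)) -> continuous (fun x => \sum_(i < n) F i x).
Proof.
elim: n F => [|n IH] F hF.
  have -> : (fun x => \sum_(i < 0) F i x) = fun=> 0 by apply: funext => x; rewrite big_ord0.
  exact: cst_continuous.
have -> : (fun x => \sum_(i < n.+1) F i x) =
   (fun x => \sum_(i < n) F (widen_ord (leqnSn n) i) x + F ord_max x).
  by apply: funext => x; rewrite big_ord_recr.
move=> x.
have h := cvgD (IH (fun i => F (widen_ord (leqnSn n) i)) (fun i => hF _) x) (hF ord_max x).
exact: h.
Qed.

Lemma cont_mx (T : topologicalType) a b (g : T -> 'M[R]_(a, b)) :
  (forall i j, continuous (fun x => g x i j)) -> continuous g.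
Proof.
move=> hg x A [P Pn sPA].
apply: (@filterS _ _ _ [set y | forall i j, P i j (g y i j)]).
  by move=> y hy; apply: sPA.
apply: filter_forall => i; apply: filter_forall => j.
exact: hg (Pn i j).
Qed.


Variable N : nat.

Definition Fm (f : X) : 'M[R]_(prodd N m, prodd N p) := \sum_(k < r) kronN N (Mat f k).

Lemma cont_Fm : continuous Fm.
Proof.
apply: cont_mx => i j.
have -> : (fun x => Fm x i j) = fun x => \sum_(k < r) kronN N (Mat x k) i j.
  by apply: funext => x; rewrite /Fm summxE.
by apply: cont_sum => k; exact: cont_kron.
Qed.

Lemma cont_frob k : continuous (fun f : X => frob (kronN N (Mat f k))).
Proof.
move=> f.
have h1 : continuous (fun f : X => \sum_(i < prodd N m) \sum_(j < prodd N p)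
                                  kronN N (Mat f k) i j ^+ 2).
  apply: cont_sum => i; apply: cont_sum => j.
  have -> : (fun x : X => kronN N (Mat x k) i j ^+ 2) =
     (fun x : X => kronN N (Mat x k) i j * kronN N (Mat x k) i j).
    by apply: funext => x; rewrite expr2.
  move=> x; have h := cvgM (@cont_kron k N i j x) (@cont_kron k N i j x).
  exact: h.
have h := continuous_comp (h1 f) (@sqrt_continuous R _).
exact: h.
Qed.

Lemma compact_box (b : R) : @compact X [set f : X | forall i, `[-b, b]%classic (f i)].
Proof.
have h := @tychonoff Idx (fun _ => (R : topologicalType)) (fun _ => `[-b, b]%classic)
   (fun _ => @segment_compact R _ _).
exact: h.
Qed.

Lemma closed_C (c : R) : @closed X [set f : X | forall k, frob (kronN N (Mat f k)) <= c].
Proof.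
have -> : [set f : X | forall k, frob (kronN N (Mat f k)) <= c] =
  \bigcap_(k in [set: 'I_r]) ((fun f : X => frob (kronN N (Mat f k))) @^-1` [set x | x <= c]).
  by apply/seteqP; split => f /= hf k; [move=> _; exact: hf | exact: hf].
apply: closed_bigI => k _; apply: preimage_closed.
  by move=> f _; exact: cont_frob.
exact: closed_le.
Qed.

End Top.

Section Get.
Variable R : realType.
Definition getE a b (A : 'M[R]_(a,b)) (i j : nat) : R :=
  if (insub i : option 'I_a) is Some i' then
    if (insub j : option 'I_b) is Some j' then A i' j' else 0 else 0.

Lemma getE_ord a b (A : 'M[R]_(a,b)) (i : 'I_a) (j : 'I_b) : getE A i j = A i j.
Proof. by rewrite /getE !valK. Qed.

Lemma getE_bound a b (A : 'M[R]_(a,b)) B : 0 <= B ->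
  (forall i j, `|A i j| <= B) -> forall i j, `|getE A i j| <= B.
Proof.
move=> B0 h i j; rewrite /getE; case: insub => [i'|]; last by rewrite normr0.
by case: insub => [j'|] //; rewrite normr0.
Qed.
End Get.


Theorem corollary1 (R : realType) (N r : nat) (m p : nat -> nat) (c : R) :
  (2 <= N)%N -> (1 <= r)%N -> 0 < c ->
  topology_structure.closed (@bounded_low_rank_set R N r m p c).
Proof.
move=> N2 r1 c0.
have -> : @bounded_low_rank_set R N r m p c = (@Fm R r m p N) @`
   ([set f : X R r | forall i, `[-(1+c), 1+c]%classic (f i)] `&`
    [set f : X R r | forall k, frob (kronN N (@Mat R r m p f k)) <= c]).
  apply/seteqP; split.
  - move=> D [Ds [-> hDs]].
    have : forall k : 'I_r, exists D' : forall n, 'M[R]_(m n, p n),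
        kronN N D' = kronN N (Ds k) /\ forall n i j, `|D' n i j| <= 1 + c.
      move=> k; apply: rescale => //; [exact: leq_trans N2 | exact: ltW].
    move=> /boolp.choice [D' hD'].
    pose f : X R r := fun x => getE (D' x.1.1.1 x.1.1.2) x.1.2 x.2.
    have Mf : forall k, @Mat R r m p f k = D' k.
      move=> k; apply: boolp.functional_extensionality_dep => n.
      by apply/matrixP => i j; rewrite mxE /f /= getE_ord.
    exists f.
      split.
      + move=> [[[k n] i] j] /=; rewrite in_itv /= -ler_norml.
        apply: getE_bound; last exact: (hD' k).2.
        by rewrite addr_ge0 // ltW.
      + by move=> k /=; rewrite Mf (hD' k).1; exact: hDs.
    by rewrite /Fm; apply: eq_bigr => k _; rewrite Mf (hD' k).1.
  - by move=> D [f [_ hf] <-]; exists (@Mat R r m p f); split.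
apply: compact_closed; first exact: norm_hausdorff.
apply: continuous_compact; first exact/continuous_subspaceT/cont_Fm.
apply: compact_closedI; [exact: compact_box | exact: closed_C].
Qed.
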